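(* Let $\mathbb{C}$ be a regular category, $n$ a positive integer, and for each $i\in\{1,\dots,n\}$ let $\alpha_i':Q_i\to A$ and $\beta_i':Q_i\to B$ be regular epimorphisms and $a_i:A\to C_i$, $b_i:B\to C_i$ morphisms with $b_i\beta_i'=a_i\alpha_i'$. Then there exist an object $Q$, a regular epimorphism $\alpha:Q\to A$ and regular epimorphisms $\beta_i:Q\to B$ ($i=1,\dots,n$) such that $b_i\beta_i=a_i\alpha$ for every $i\in\{1,\dots,n\}$.
   Context: A category is regular if it has finite limits and coequalizers of kernel pairs and regular epimorphisms are stable under pullback. *)

(* Defs.v *)
Set Implicit Arguments.
Unset Strict Implicit.

Record Category := {
  Obj :> Type;
  Hom : Obj -> Obj -> Type;
  id : forall X, Hom X X;
  comp : forall X Y Z, Hom Y Z -> Hom X Y -> Hom X Z;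
  comp_id_l : forall X Y (f : Hom X Y), comp (id Y) f = f;
  comp_id_r : forall X Y (f : Hom X Y), comp f (id X) = f;
  comp_assoc : forall W X Y Z (f : Hom W X) (g : Hom X Y) (h : Hom Y Z),
      comp h (comp g f) = comp (comp h g) f
}.

Arguments Hom {C} X Y : rename.
Arguments id {C} X : rename.
Arguments comp {C X Y Z} g f : rename.
Notation "g \o f" := (comp g f) (at level 40, left associativity).

Section Defs.
Variable C : Category.

Definition is_terminal (T : C) : Prop :=
  forall X : C, exists t : Hom X T, forall t' : Hom X T, t' = t.

Definition is_pullback {X Y Z P : C} (f : Hom X Z) (g : Hom Y Z)
    (p1 : Hom P X) (p2 : Hom P Y) : Prop :=
  f \o p1 = g \o p2 /\
  forall (W : C) (u : Hom W X) (v : Hom W Y), f \o u = g \o v ->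
    exists h : Hom W P, (p1 \o h = u /\ p2 \o h = v) /\
      forall h' : Hom W P, p1 \o h' = u -> p2 \o h' = v -> h' = h.

Definition is_coequalizer {X Y Q : C} (u v : Hom X Y) (q : Hom Y Q) : Prop :=
  q \o u = q \o v /\
  forall (W : C) (k : Hom Y W), k \o u = k \o v ->
    exists h : Hom Q W, h \o q = k /\
      forall h' : Hom Q W, h' \o q = k -> h' = h.

Definition regular_epi {Y Q : C} (q : Hom Y Q) : Prop :=
  exists (X : C) (u v : Hom X Y), is_coequalizer u v q.

Definition has_finite_limits : Prop :=
  (exists T : C, is_terminal T) /\
  forall (X Y Z : C) (f : Hom X Z) (g : Hom Y Z),
    exists (P : C) (p1 : Hom P X) (p2 : Hom P Y), is_pullback f g p1 p2.

Definition is_kernel_pair {X Z P : C} (f : Hom X Z) (p1 p2 : Hom P X) : Prop :=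
  is_pullback f f p1 p2.

Definition has_coeq_of_kernel_pairs : Prop :=
  forall (X Z P : C) (f : Hom X Z) (p1 p2 : Hom P X),
    is_kernel_pair f p1 p2 ->
    exists (Q : C) (q : Hom X Q), is_coequalizer p1 p2 q.

Definition regular_epi_pullback_stable : Prop :=
  forall (X Y Z P : C) (f : Hom X Z) (g : Hom Y Z) (p1 : Hom P X) (p2 : Hom P Y),
    regular_epi f -> is_pullback f g p1 p2 -> regular_epi p2.

Definition regular_category : Prop :=
  has_finite_limits /\ has_coeq_of_kernel_pairs /\ regular_epi_pullback_stable.

End Defs.

Arguments regular_epi {C Y Q} q.

(* Main.v *)
Require Import Defs.
From Stdlib Require Import Lia PeanoNat.
Set Implicit Arguments.

Section Aux.
Variable C : Category.

Lemma ca {W X Y Z : C} (f : Hom W X) (g : Hom X Y) (h : Hom Y Z) :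
  h \o (g \o f) = (h \o g) \o f.
Proof. apply comp_assoc. Qed.

Lemma regepi_epi {Y Q W : C} (q : Hom Y Q) : regular_epi q ->
  forall (x y : Hom Q W), x \o q = y \o q -> x = y.
Proof.
  intros [X [u [v [Hc Hu]]]] x y Hxy.
  destruct (Hu W (x \o q)) as [h [_ Hh]].
  { rewrite <- !ca, Hc. reflexivity. }
  rewrite (Hh x eq_refl), (Hh y (eq_sym Hxy)). reflexivity.
Qed.

Lemma pb_sym {X Y Z P : C} (f : Hom X Z) (g : Hom Y Z) p1 p2 :
  is_pullback f g p1 p2 -> @is_pullback C Y X Z P g f p2 p1.
Proof.
  intros [Hc Hu]. split; [symmetry; exact Hc|].
  intros W u v Huv. destruct (Hu W v u (eq_sym Huv)) as [h [[H1 H2] H3]].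
  exists h. split; [split; assumption|]. intros h' Ha Hb. apply H3; assumption.
Qed.

Lemma regepi_kp {X Z P : C} (q : Hom X Z) (p1 p2 : Hom P X) :
  regular_epi q -> is_kernel_pair q p1 p2 -> is_coequalizer p1 p2 q.
Proof.
  intros Hq Hk. pose proof Hq as [X0 [u [v [Hc Hu]]]].
  destruct Hk as [Hp Hpu]. split; [exact Hp|].
  intros W k Hkk. destruct (Hpu X0 u v Hc) as [h [[H1 H2] _]].
  apply Hu. rewrite <- H1, <- H2, !ca, Hkk. reflexivity.
Qed.

Lemma comp_regepi (HC : regular_category C) {X Y Z : C} (f : Hom X Y) (g : Hom Y Z) :
  regular_epi f -> regular_epi g -> regular_epi (g \o f).
Proof.
  intros Hf Hg. destruct HC as [[_ Hpb] [_ Hst]].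
  destruct (Hpb _ _ _ (g \o f) (g \o f)) as [K [r1 [r2 Hr]]].
  exists K, r1, r2. pose proof Hr as [Hr0 Hru]. split; [exact Hr0|].
  intros W k Hk.
  destruct (Hpb _ _ _ f f) as [S [s1 [s2 Hs]]].
  pose proof (regepi_kp Hf Hs) as [_ Hfc]. pose proof Hs as [Hs0 _].
  destruct (Hfc W k) as [k1 [Hk1 _]].
  { destruct (Hru S s1 s2) as [h [[H1 H2] _]].
    { rewrite <- !ca, Hs0. reflexivity. }
    rewrite <- H1, <- H2, !ca, Hk. reflexivity. }
  destruct (Hpb _ _ _ g g) as [T [t1 [t2 Ht]]].
  pose proof (regepi_kp Hg Ht) as [_ Hgc]. pose proof Ht as [Ht0 _].
  destruct (Hpb _ _ _ f t1) as [P1 [u1 [e1 He1]]].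
  pose proof (Hst _ _ _ _ _ _ _ _ Hf He1) as Re1. pose proof He1 as [He10 _].
  destruct (Hpb _ _ _ f (t2 \o e1)) as [P2 [u2 [e2 He2]]].
  pose proof (Hst _ _ _ _ _ _ _ _ Hf He2) as Re2. pose proof He2 as [He20 _].
  destruct (Hru P2 (u1 \o e2) u2) as [h [[H1 H2] _]].
  { rewrite <- !ca, (ca e2 u1 f), He10, He20, !ca, Ht0. reflexivity. }
  assert (Hkk : k1 \o t1 = k1 \o t2).
  { apply (regepi_epi Re1). apply (regepi_epi Re2).
    transitivity (k \o u2).
    - rewrite ?ca, <- (ca e1 t1 k1), <- He10, ca, Hk1, <- ca, <- H1, ca, Hk, <- ca, H2.
      reflexivity.
    - rewrite <- Hk1, <- ca, He20, ?ca. reflexivity. }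
  destruct (Hgc W k1 Hkk) as [k2 [Hk2 _]].
  exists k2. split.
  - rewrite ca, Hk2. exact Hk1.
  - intros h' Hh'. apply (regepi_epi Hg). apply (regepi_epi Hf).
    rewrite <- !ca, Hh', ca, Hk2. symmetry; exact Hk1.
Qed.

End Aux.

Theorem lemma5p4 (C : Category) (HC : regular_category C) (n : nat) (hn : 0 < n)
  (A B : C) (Qs Cs : nat -> C)
  (alpha' : forall i, Hom (Qs i) A) (beta' : forall i, Hom (Qs i) B)
  (a : forall i, Hom A (Cs i)) (b : forall i, Hom B (Cs i))
  (halpha' : forall i, 1 <= i <= n -> regular_epi (alpha' i))
  (hbeta' : forall i, 1 <= i <= n -> regular_epi (beta' i))
  (hcomm : forall i, 1 <= i <= n -> b i \o beta' i = a i \o alpha' i) :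
  exists (Q : C) (alpha : Hom Q A) (beta : nat -> Hom Q B),
    regular_epi alpha /\
    (forall i, 1 <= i <= n -> regular_epi (beta i)) /\
    (forall i, 1 <= i <= n -> b i \o beta i = a i \o alpha).
Proof.
  assert (S : forall k, 1 <= k -> k <= n ->
    exists (Q : C) (alpha : Hom Q A) (beta : nat -> Hom Q B),
    regular_epi alpha /\
    (forall i, 1 <= i <= k -> regular_epi (beta i)) /\
    (forall i, 1 <= i <= k -> b i \o beta i = a i \o alpha)).
  { induction k as [|k IH]; intros H1 H2; [lia|].
    destruct (Nat.eq_dec k 0) as [->|Hk].
    - exists (Qs 1), (alpha' 1), (fun _ => beta' 1).
      split; [apply halpha'; lia|]. split.
      + intros i Hi. apply hbeta'; lia.
      + intros i Hi. assert (i = 1) by lia. subst. apply hcomm; lia.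
    - destruct IH as [P [al [be [Hal [Hbe Hc]]]]]; [lia|lia|].
      pose proof HC as [[_ Hpb] [_ Hst]].
      destruct (Hpb _ _ _ al (alpha' (S k))) as [P' [r1 [r2 Hr]]].
      pose proof (Hst _ _ _ _ _ _ _ _ Hal Hr) as R2.
      pose proof (Hst _ _ _ _ _ _ _ _ (halpha' (S k) ltac:(lia)) (pb_sym Hr)) as R1.
      pose proof Hr as [Hr0 _].
      exists P', (al \o r1),
        (fun i => if Nat.eq_dec i (S k) then beta' (S k) \o r2 else be i \o r1).
      split; [apply comp_regepi; assumption|]. split.
      + intros i Hi. destruct (Nat.eq_dec i (S k)) as [->|Hne].
        * apply comp_regepi; [assumption|assumption|apply hbeta'; lia].
        * apply comp_regepi; [assumption|assumption|apply Hbe; lia].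
      + intros i Hi. destruct (Nat.eq_dec i (S k)) as [->|Hne].
        * rewrite ca, hcomm by lia. rewrite <- ca, <- Hr0, ca. reflexivity.
        * rewrite ca, Hc by lia. rewrite ca. reflexivity. }
  apply (S n); lia.
Qed.
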